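(* For $N\in\mathbb{N}$ and $m\in\mathbb{Z}_+$, $$\gamma_N^{2m,2m}=2^{2m}\,m!\,(2m)!\,\Bigl(\frac N2+m-1\Bigr)_m.$$
   Context: $|x|_N$ is the Euclidean norm on $\mathbb{R}^N$, $I_N=\{1,\ldots,N\}$, $D_i=\partial_{x_{i_1}}\cdots\partial_{x_{i_k}}$ for $i\in I_N^k$, $|\nabla_N^k u(x)|_{N^k}=\bigl(\sum_{i\in I_N^k}(D_iu(x))^2\bigr)^{1/2}$ (for $k=0$ this is $|u(x)|$). For $k\in\mathbb{Z}_+$, $s\in\mathbb{R}$, $\gamma_N^{s,k}$ denotes the constant value of $(|x|_N^{k-s}|\nabla_N^k[|x|_N^s]|_{N^k})^2$ on $\mathbb{R}^N\setminus\{0\}$ (it is known to be constant). $(\nu)_m=\prod_{j=0}^{m-1}(\nu-j)$, $(\nu)_0=1$. *)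

(* Defs.v *)
From HB Require Import structures.
From mathcomp Require Import all_boot all_order all_algebra.
From mathcomp Require Import all_classical all_reals all_analysis.
Set Implicit Arguments. Unset Strict Implicit. Unset Printing Implicit Defensive.
Import Order.TTheory GRing.Theory Num.Theory.
Import numFieldNormedType.Exports.
Local Open Scope ring_scope.

Section Defs.
Variable R : realType.
Variable N : nat.

Definition eucl_norm (x : 'rV[R]_N) : R := Num.sqrt (\sum_(j < N) x ord0 j ^+ 2).

Definition partial (j : 'I_N) (u : 'rV[R]_N -> R) : 'rV[R]_N -> R :=
  fun x => 'D_(delta_mx ord0 j) u x.

Definition Dmulti (k : nat) (i : k.-tuple 'I_N) (u : 'rV[R]_N -> R) : 'rV[R]_N -> R :=
  foldr partial u i.

Definition grad_norm (k : nat) (u : 'rV[R]_N -> R) (x : 'rV[R]_N) : R :=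
  Num.sqrt (\sum_(i : k.-tuple 'I_N) (Dmulti i u x) ^+ 2).

Definition norm_pow (s : R) : 'rV[R]_N -> R := fun x => eucl_norm x `^ s.

(* the quantity (|x|^{k-s} |nabla^k [|x|^s]|)^2 whose constant value is gamma_N^{s,k} *)
Definition gamma_at (s : R) (k : nat) (x : 'rV[R]_N) : R :=
  (eucl_norm x `^ (k%:R - s) * grad_norm k (norm_pow s) x) ^+ 2.
End Defs.

Definition falling (R : ringType) (nu : R) (m : nat) : R :=
  \prod_(j < m) (nu - j%:R).

(* Main.v *)
Require Import Defs.
From HB Require Import structures.
From mathcomp Require Import all_boot all_order all_algebra.
From mathcomp Require Import all_classical all_reals all_analysis.
From mathcomp Require Import zify ring lra.
Import Order.TTheory GRing.Theory Num.Theory.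
Import numFieldNormedType.Exports.
Local Open Scope ring_scope.

Lemma dM {R : realType} {N : nat} (f g : 'rV[R]_N -> R) x v :
  derivable f x v -> derivable g x v ->
  'D_v (fun y => f y * g y) x = f x * 'D_v g x + g x * 'D_v f x.
Proof. exact: deriveM. Qed.
Lemma dMd {R : realType} {N : nat} (f g : 'rV[R]_N -> R) x v :
  derivable f x v -> derivable g x v ->
  derivable (fun y => f y * g y) x v.
Proof. exact: derivableM. Qed.
Lemma dD {R : realType} {N : nat} (f g : 'rV[R]_N -> R) x v :
  derivable f x v -> derivable g x v ->
  'D_v (fun y => f y + g y) x = 'D_v f x + 'D_v g x.
Proof. exact: deriveD. Qed.
Lemma dDd {R : realType} {N : nat} (f g : 'rV[R]_N -> R) x v :
  derivable f x v -> derivable g x v ->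
  derivable (fun y => f y + g y) x v.
Proof. exact: derivableD. Qed.
Lemma dC {R : realType} {N : nat} (c : R) (x v : 'rV[R]_N) :
  'D_v (fun _ => c) x = 0.
Proof. exact: derive_cst. Qed.
Lemma dCd {R : realType} {N : nat} (c : R) (x v : 'rV[R]_N) :
  derivable (fun _ => c) x v.
Proof. exact: derivable_cst. Qed.
Lemma dXd {R : realType} {N : nat} (j : 'I_N) (x v : 'rV[R]_N) :
  derivable (fun y : 'rV[R]_N => y ord0 j) x v.
Proof. by move/derivable_mxP: (@derivable_id _ _ x v); apply. Qed.
Lemma dX {R : realType} {N : nat} (j : 'I_N) (x v : 'rV[R]_N) :
  'D_v (fun y : 'rV[R]_N => y ord0 j) x = v ord0 j.
Proof.
have := derive_mx (@derivable_id _ _ x v).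
rewrite derive_id => /(congr1 (fun M : 'rV[R]_N => M ord0 j)) ->; by rewrite mxE.
Qed.


Inductive pd {R : realType} {N : nat} : nat -> ('rV[R]_N -> R) -> Prop :=
| pdC n c : pd n (fun _ => c)
| pdX n j : pd n.+1 (fun y => y ord0 j)
| pdD n f g : pd n f -> pd n g -> pd n (fun y => f y + g y)
| pdM n k f g : pd n f -> pd k g -> pd (n + k) (fun y => f y * g y).
Arguments pdC {R N n}. Arguments pdX {R N n}. Arguments pdD {R N n f g}. Arguments pdM {R N n k f g}.

Lemma pd_der {R : realType} {N : nat} n (f : 'rV[R]_N -> R) x v :
  pd n f -> derivable f x v.
Proof.
elim=> {n f}.
- move=> *; exact: dCd.
- move=> *; exact: dXd.
- move=> *; exact: dDd.
- move=> *; exact: dMd.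
Qed.

Lemma pd_up {R : realType} {N : nat} n (f : 'rV[R]_N -> R) : pd n f -> pd n.+1 f.
Proof.
elim=> {n f}.
- by move=> *; apply: pdC.
- by move=> *; apply: pdX.
- by move=> *; apply: pdD.
- by move=> n k f g _ H pg _; have := pdM H pg; rewrite addSn.
Qed.

Lemma pd_le {R : realType} {N : nat} n m (f : 'rV[R]_N -> R) : (n <= m)%N -> pd n f -> pd m f.
Proof.
elim: m => [|m IH]; first by rewrite leqn0 => /eqP ->.
rewrite leq_eqVlt => /orP[/eqP -> //|]; rewrite ltnS => /IH H /H; exact: pd_up.
Qed.

Lemma partialC {R : realType} {N : nat} (j : 'I_N) (c : R) :
  partial j (fun _ : 'rV[R]_N => c) = fun _ => 0.
Proof. by apply/funext => y; rewrite /partial dC. Qed.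

Lemma partialX {R : realType} {N : nat} (j l : 'I_N) :
  partial j (fun y : 'rV[R]_N => y ord0 l) = fun _ => (l == j)%:R.
Proof. by apply/funext => y; rewrite /partial dX mxE eqxx. Qed.

Lemma partialD {R : realType} {N : nat} (j : 'I_N) (f g : 'rV[R]_N -> R) :
  (forall x, derivable f x (delta_mx ord0 j)) -> (forall x, derivable g x (delta_mx ord0 j)) ->
  partial j (fun y => f y + g y) = fun y => partial j f y + partial j g y.
Proof. by move=> hf hg; apply/funext => y; rewrite /partial dD. Qed.

Lemma partialM {R : realType} {N : nat} (j : 'I_N) (f g : 'rV[R]_N -> R) :
  (forall x, derivable f x (delta_mx ord0 j)) -> (forall x, derivable g x (delta_mx ord0 j)) ->
  partial j (fun y => f y * g y) = fun y => f y * partial j g y + g y * partial j f y.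
Proof. by move=> hf hg; apply/funext => y; rewrite /partial dM. Qed.

Lemma pd0' {R : realType} {N : nat} n (f : 'rV[R]_N -> R) j : pd n f -> n = 0%N -> partial j f = fun _ => (0:R).
Proof.
elim => {n f}.
- by move=> *; rewrite partialC.
- by [].
- move=> n f g pf IHf pg IHg Hn; rewrite partialD; last 2 first.
  + by move=> x; apply: pd_der pf.
  + by move=> x; apply: pd_der pg.
  by rewrite IHf // IHg //; apply/funext => y; rewrite addr0.
- move=> n k f g pf IHf pg IHg /eqP; rewrite addn_eq0 => /andP[/eqP n0 /eqP k0].
  rewrite partialM; last 2 first.
  + by move=> x; apply: pd_der pf.
  + by move=> x; apply: pd_der pg.
  by rewrite IHf // IHg //; apply/funext => y; rewrite !mulr0 addr0.
Qed.
Lemma pd0 {R : realType} {N : nat} (f : 'rV[R]_N -> R) j : pd 0 f -> partial j f = fun _ => (0:R).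
Proof. by move=> H; apply: pd0' H _. Qed.


Lemma pd_partial {R : realType} {N : nat} n (f : 'rV[R]_N -> R) j :
  pd n f -> pd n.-1 (partial j f).
Proof.
elim => {n f}.
- by move=> n c; rewrite partialC; apply: pdC.
- by move=> n l; rewrite partialX; apply: pdC.
- move=> n f g pf IHf pg IHg; rewrite partialD; last 2 first.
  + by move=> x; apply: pd_der pf.
  + by move=> x; apply: pd_der pg.
  exact: pdD.
- move=> n k f g pf IHf pg IHg; rewrite partialM; last 2 first.
  + by move=> x; apply: pd_der pf.
  + by move=> x; apply: pd_der pg.
  case: k pg IHg => [|k] pg IHg.
    rewrite (pd0 _ j pg).
    have -> : (fun y => f y * (fun=> (0:R)) y + g y * partial j f y) = (fun y => g y * partial j f y).
      by apply/funext => y; rewrite mulr0 add0r.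
    by apply: (pd_le _ _ _ _ (pdM pg IHf)); lia.
  case: n pf IHf => [|n] pf IHf.
    rewrite (pd0 _ j pf).
    have -> : (fun y => f y * partial j g y + g y * (fun=> (0:R)) y) = (fun y => f y * partial j g y).
      by apply/funext => y; rewrite mulr0 addr0.
    by apply: (pd_le _ _ _ _ (pdM pf IHg)); lia.
  apply: pdD.
    by apply: (pd_le _ _ _ _ (pdM pf IHg)); lia.
  by apply: (pd_le _ _ _ _ (pdM pg IHf)); lia.
Qed.


Ltac sder := let x := fresh in move=> x; apply: pd_der; repeat apply: pd_partial; eassumption.

Lemma pd_comm {R : realType} {N : nat} n (f : 'rV[R]_N -> R) j l :
  pd n f -> partial j (partial l f) = partial l (partial j f).
Proof.
elim => {n f}.
- by move=> n c; rewrite !partialC.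
- by move=> n i; rewrite !partialX !partialC.
- move=> n f g pf IHf pg IHg.
  rewrite (partialD l) ?(partialD j); try sder.
  rewrite !partialD; try sder.
  by rewrite IHf IHg.
- move=> n k f g pf IHf pg IHg.
  rewrite (partialM l) ?(partialM j); try sder.
  rewrite !partialD; try (move=> x; apply: pd_der; apply: pdM; [eassumption|apply: pd_partial; eassumption]).
  rewrite !partialM; try sder.
  apply/funext => y; rewrite IHf IHg; ring.
Qed.


Arguments pd_partial {R N n f}. Arguments pd_comm {R N n f}. Arguments pd0 {R N f}. Arguments pd_le {R N n m f}.
Definition Ds {R : realType} {N : nat} (s : seq 'I_N) (u : 'rV[R]_N -> R) := foldr (@partial R N) u s.

Lemma pd_partial' {R : realType} {N : nat} n (f : 'rV[R]_N -> R) j :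
  pd n f -> pd n (partial j f).
Proof. move=> H; apply: (pd_le _ (pd_partial j H)); exact: leq_pred. Qed.
Arguments pd_partial' {R N n f}.

Lemma Ds_pd {R : realType} {N : nat} n (f : 'rV[R]_N -> R) s :
  pd n f -> pd n (Ds s f).
Proof. by move=> H; elim: s => [|a s IH] //=; apply: pd_partial'. Qed.
Arguments Ds_pd {R N n f}.

Lemma Ds_comm {R : realType} {N : nat} n (f : 'rV[R]_N -> R) j s :
  pd n f -> partial j (Ds s f) = Ds s (partial j f).
Proof.
move=> H; elim: s => [|a s IH] //=.
by rewrite (pd_comm j a (Ds_pd s H)) IH.
Qed.
Arguments Ds_comm {R N n f}.

Lemma Ds_add {R : realType} {N : nat} n k (f g : 'rV[R]_N -> R) s :
  pd n f -> pd k g -> Ds s (fun y => f y + g y) = fun y => Ds s f y + Ds s g y.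
Proof.
move=> pf pg; elim: s => [|a s IH] //=.
rewrite IH partialD //; move=> x; apply: pd_der; apply: Ds_pd; eassumption.
Qed.
Arguments Ds_add {R N n k f g}.

Lemma Ds_scal {R : realType} {N : nat} n (c : R) (f : 'rV[R]_N -> R) s :
  pd n f -> Ds s (fun y => c * f y) = fun y => c * Ds s f y.
Proof.
move=> pf; elim: s => [|a s IH] //=.
rewrite IH partialM ?partialC.
- by apply/funext => y; rewrite mulr0 addr0.
- by move=> x; apply: dCd.
- move=> x; apply: pd_der; apply: Ds_pd; eassumption.
Qed.
Arguments Ds_scal {R N n}.

Lemma Ds_vanish {R : realType} {N : nat} n (f : 'rV[R]_N -> R) s :
  pd n f -> size s = n.+1 -> Ds s f = fun _ => 0.
Proof.
elim: s n f => [|a s IH] n f //= pf [] hs.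
rewrite (Ds_comm a s pf).
case: n pf hs => [|n] pf hs.
  by case: s IH hs => // _ _ /=; rewrite (pd0 a pf).
exact: IH (pd_partial a pf) hs.
Qed.
Arguments Ds_vanish {R N n f}.

Lemma pd_sum {R : realType} {N : nat} n (F : 'I_N -> 'rV[R]_N -> R) (r : seq 'I_N) :
  (forall j, pd n (F j)) -> pd n (fun y => \sum_(j <- r) F j y).
Proof.
move=> H; elim: r => [|a r IH].
  have -> : (fun y => \sum_(j <- [::]) F j y) = fun _ => 0 by apply/funext => y; rewrite big_nil.
  exact: pdC.
have -> : (fun y => \sum_(j <- a :: r) F j y) = fun y => F a y + \sum_(j <- r) F j y.
  by apply/funext => y; rewrite big_cons.
exact: pdD.
Qed.
Arguments pd_sum {R N n F}.

Lemma Ds_sum {R : realType} {N : nat} n (F : 'I_N -> 'rV[R]_N -> R) (r : seq 'I_N) s :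
  (forall j, pd n (F j)) -> Ds s (fun y => \sum_(j <- r) F j y) = fun y => \sum_(j <- r) Ds s (F j) y.
Proof.
move=> H; elim: r => [|a r IH].
  have -> : (fun y => \sum_(j <- [::]) F j y) = fun _ => 0 by apply/funext => y; rewrite big_nil.
  have -> : (fun y => \sum_(j <- [::]) Ds s (F j) y) = fun _ => 0 by apply/funext => y; rewrite big_nil.
  by elim: s => [|b s IHs] //=; rewrite IHs partialC.
have -> : (fun y => \sum_(j <- a :: r) F j y) = fun y => F a y + \sum_(j <- r) F j y.
  by apply/funext => y; rewrite big_cons.
rewrite (Ds_add s (H a) (pd_sum r H)) IH.
by apply/funext => y; rewrite big_cons.
Qed.


Lemma sum_tupleS {R : realType} {N : nat} k (F : k.+1.-tuple 'I_N -> R) :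
  \sum_(t : k.+1.-tuple 'I_N) F t = \sum_(j : 'I_N) \sum_(t : k.-tuple 'I_N) F [tuple of j :: t].
Proof.
rewrite pair_big /=.
rewrite (reindex (fun p : 'I_N * k.-tuple 'I_N => [tuple of p.1 :: p.2])) //=.
exists (fun t : k.+1.-tuple 'I_N => (thead t, [tuple of behead t])).
  by move=> [j t] _ /=; congr pair; apply: val_inj.
by move=> t _; rewrite [in RHS](tuple_eta t).
Qed.

Lemma sum_tuple0 {R : realType} {N : nat} (F : 0.-tuple 'I_N -> R) :
  \sum_(t : 0.-tuple 'I_N) F t = F [tuple].
Proof.
rewrite (big_pred1 [tuple]) // => t /=; apply/esym/eqP/val_inj; by case: t => [[]].
Qed.

Definition B {R : realType} {N : nat} k (u v : 'rV[R]_N -> R) x :=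
  \sum_(i : k.-tuple 'I_N) Ds i u x * Ds i v x.

Lemma B0 {R : realType} {N : nat} (u v : 'rV[R]_N -> R) x : B 0 u v x = u x * v x.
Proof. by rewrite /B sum_tuple0. Qed.

Lemma BS {R : realType} {N : nat} k n m (u v : 'rV[R]_N -> R) x : pd n u -> pd m v ->
  B k.+1 u v x = \sum_j B k (partial j u) (partial j v) x.
Proof.
move=> pu pv; rewrite /B sum_tupleS; apply: eq_bigr => j _; apply: eq_bigr => t _ /=.
by rewrite /Ds /= -/(Ds _ _) (Ds_comm j t pu) (Ds_comm j t pv).
Qed.

Arguments BS {R N k n m u v}.

Lemma B_addl {R : realType} {N : nat} d n k (f g q : 'rV[R]_N -> R) x :
  pd n f -> pd k g -> B d (fun y => f y + g y) q x = B d f q x + B d g q x.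
Proof.
move=> pf pg; rewrite /B -big_split; apply: eq_bigr => i _.
by rewrite (Ds_add _ pf pg) mulrDl.
Qed.
Arguments B_addl {R N d n k f g q x}.

Lemma B_scall {R : realType} {N : nat} d n c (f q : 'rV[R]_N -> R) x :
  pd n f -> B d (fun y => c * f y) q x = c * B d f q x.
Proof.
move=> pf; rewrite /B mulr_sumr; apply: eq_bigr => i _.
by rewrite (Ds_scal _ _ _ pf) mulrA.
Qed.
Arguments B_scall {R N d n c f q x}.

Lemma B_sym {R : realType} {N : nat} d (f q : 'rV[R]_N -> R) x :
  B d f q x = B d q f x.
Proof. by rewrite /B; apply: eq_bigr => i _; rewrite mulrC. Qed.

Lemma B_sumr {R : realType} {N : nat} d n (F : 'I_N -> 'rV[R]_N -> R) (g : 'rV[R]_N -> R) x :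
  (forall j, pd n (F j)) -> \sum_j B d g (F j) x = B d g (fun y => \sum_j F j y) x.
Proof.
move=> pF; rewrite /B exchange_big /=; apply: eq_bigr => i _.
by rewrite (Ds_sum _ _ _ _ pF) mulr_sumr.
Qed.
Arguments B_sumr {R N d n F g x}.

Lemma partial_Xg {R : realType} {N : nat} n (g : 'rV[R]_N -> R) j l :
  pd n g -> partial l (fun y => y ord0 j * g y) = fun y => y ord0 j * partial l g y + (j == l)%:R * g y.
Proof.
move=> pg; rewrite (partialM l (fun y => y ord0 j) g) ?partialX.
- by apply/funext => y /=; rewrite [g y * _]mulrC.
- by move=> x; apply: dXd.
- by move=> x; apply: pd_der pg.
Qed.
Arguments partial_Xg {R N n g}.

Lemma sum_delta {R : realType} {N : nat} (j : 'I_N) (F : 'I_N -> R) :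
  \sum_l (j == l)%:R * F l = F j.
Proof.
rewrite (bigD1 j) //= eqxx mul1r big1 ?addr0 // => l /negbTE.
by rewrite eq_sym => ->; rewrite mul0r.
Qed.

Lemma L2 {R : realType} {N : nat} d (j : 'I_N) n m (g q : 'rV[R]_N -> R) :
  pd n g -> pd m q -> (forall s, size s = d.+1 -> Ds s g = fun _ => 0) ->
  forall x, B d.+1 (fun y => y ord0 j * g y) q x = d.+1%:R * B d g (partial j q) x.
Proof.
elim: d n m g q => [|d IH] n m g q pg pq hv x;
  rewrite (BS _ (pdM (pdX (n:=0) j) pg) pq);
  under eq_bigr => l _ do
   rewrite (partial_Xg j l pg) (B_addl (pdM (pdX (n:=0) j) (pd_partial' l pg)) (pdM (pdC (n:=0) _) pg))
     (B_scall pg);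
  rewrite big_split /= sum_delta.
- rewrite big1 ?add0r ?mul1r // => l _.
  have := hv [:: l] erefl; rewrite /Ds /= => ->.
  by rewrite B0 mulr0 mul0r.
- have hv' : forall l s, size s = d.+1 -> Ds s (partial l g) = fun _ => 0.
    move=> l s hs; rewrite -(Ds_comm l s pg); by apply: (hv (l :: s)); rewrite /= hs.
  under eq_bigr => l _ do rewrite (IH _ _ _ _ (pd_partial' l pg) (pd_partial' l pq) (hv' l)) (pd_comm j l pq).
  rewrite -mulr_sumr -(BS x pg (pd_partial' j pq)).
  by rewrite -[in RHS](addn1 d.+1) natrD mulrDl mul1r.
Qed.


Definition sq {R : realType} {N : nat} (y : 'rV[R]_N) := \sum_l y ord0 l * y ord0 l.
Definition fm {R : realType} {N : nat} k (y : 'rV[R]_N) := sq y ^+ k.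

Lemma pd_sq {R : realType} {N : nat} : pd 2 (@sq R N).
Proof. exact: (pd_sum _ (fun l => pdM (pdX (n:=0) l) (pdX (n:=0) l))). Qed.

Lemma fm0 {R : realType} {N : nat} : @fm R N 0 = fun _ => 1.
Proof. by apply/funext => y; rewrite /fm expr0. Qed.

Lemma fmS {R : realType} {N : nat} k : @fm R N k.+1 = fun y => sq y * fm k y.
Proof. by apply/funext => y; rewrite /fm exprS. Qed.

Lemma pd_fm {R : realType} {N : nat} k : pd (2 * k) (@fm R N k).
Proof.
elim: k => [|k IH]; first by rewrite fm0; apply: pdC.
rewrite fmS; apply: (pd_le _ (pdM pd_sq IH)); lia.
Qed.

Lemma partial_sq {R : realType} {N : nat} (j : 'I_N) :
  partial j (@sq R N) = fun y => 2 * y ord0 j.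
Proof.
have := Ds_sum _ (fun l (y : 'rV[R]_N) => y ord0 l * y ord0 l) (index_enum _) [:: j] (fun l => pdM (pdX (n:=0) l) (pdX (n:=0) l)).
rewrite /Ds /= => H.
rewrite [LHS](_ : _ = partial j (fun y : 'rV[R]_N => \sum_(l <- index_enum 'I_N) y ord0 l * y ord0 l)) // H.
apply/funext => y.
have P : forall l, partial j (fun y : 'rV[R]_N => y ord0 l * y ord0 l) = fun y => y ord0 l * (l == j)%:R *+ 2.
  move=> l; rewrite (partialM j (fun y => y ord0 l) (fun y => y ord0 l)) ?partialX.
  - by apply/funext => z; rewrite mulr2n.
  - by move=> ?; apply: dXd.
  - by move=> ?; apply: dXd.
under eq_bigr => l _ do rewrite P.
rewrite sumrMnl.
have E : \sum_(l < N) y ord0 l * (l == j)%:R = y ord0 j.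
  by rewrite -[RHS](sum_delta j (fun l => y ord0 l)); apply: eq_bigr => l _; rewrite eq_sym mulrC.
by rewrite E mulr2n mulrDl mul1r.
Qed.

Lemma partial_fm {R : realType} {N : nat} (j : 'I_N) k :
  partial j (@fm R N k.+1) = fun y => (2 * k.+1%:R) * (y ord0 j * fm k y).
Proof.
elim: k => [|k IH].
  rewrite fmS partialM ?partial_sq ?fm0 ?partialC.
  - by apply/funext => y /=; rewrite mulr0 add0r; ring.
  - by move=> x; apply: pd_der pd_sq.
  - by move=> x; apply: dCd.
rewrite fmS partialM ?partial_sq ?IH.
- by apply/funext => y /=; rewrite fmS /=; rewrite -!natr1; ring.
- by move=> x; apply: pd_der pd_sq.
- by move=> x; apply: pd_der (pd_fm _).
Qed.

Lemma euler {R : realType} {N : nat} m (y : 'rV[R]_N) :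
  \sum_j partial j (fun y => y ord0 j * fm m y) y = (N + 2 * m)%:R * fm m y.
Proof.
under eq_bigr => j _ do rewrite (partial_Xg j j (pd_fm m)) eqxx mul1r.
rewrite big_split /= sumr_const card_ord natrD mulrDl addrC [N%:R * _]mulr_natl; congr (_ + _).
case: m => [|k].
  by rewrite big1 ?mul0r // => j _; rewrite fm0 partialC mulr0.
under eq_bigr => j _ do rewrite partial_fm.
rewrite fmS /= -[in RHS]mulr_natl.
rewrite [sq y]/sq mulr_suml mulr_sumr; apply: eq_bigr => j _.
rewrite natrM -!natr1; ring.
Qed.


Lemma B_scalr {R : realType} {N : nat} d n c (f q : 'rV[R]_N -> R) x :
  pd n f -> B d q (fun y => c * f y) x = c * B d q f x.
Proof. by move=> pf; rewrite B_sym (B_scall pf) B_sym. Qed.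

Lemma step {R : realType} {N : nat} m (x : 'rV[R]_N) :
  B (2 * m).+2 (fm m.+1) (fm m.+1) x =
  (2 * m.+1%:R) ^+ 2 * (2 * m).+1%:R * (N + 2 * m)%:R * B (2 * m) (fm m) (fm m) x.
Proof.
have pX := fun j => pdM (pdX (n:=0) j) (pd_fm (R:=R) (N:=N) m).
rewrite (BS x (pd_fm _) (pd_fm _)).
under eq_bigr => j _ do rewrite partial_fm (B_scall (pX j)) (B_scalr _ _ _ _ _ _ (pX j))
   (L2 _ _ _ _ _ _ (pd_fm m) (pX j) (fun s hs => Ds_vanish s (pd_fm m) hs)).
rewrite -mulr_sumr -mulr_sumr -mulr_sumr.
rewrite (B_sumr (fun j => pd_partial' j (pX j))).
have -> : (fun y => \sum_j partial j (fun y0 : 'rV[R]_N => y0 ord0 j * fm m y0) y) =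
  fun y => (N + 2 * m)%:R * fm m y by apply/funext => y; rewrite euler.
rewrite (B_scalr _ _ _ _ _ _ (pd_fm m)); ring.
Qed.


Lemma Bmain {R : realType} {N : nat} m (x : 'rV[R]_N) :
  B (2 * m) (fm m) (fm m) x =
    2 ^+ (2 * m) * (m`!)%:R * ((2 * m)`!)%:R * falling (N%:R / 2 + m%:R - 1) m.
Proof.
elim: m => [|m IH].
  by rewrite B0 fm0 /falling big_ord0 muln0 expr0 fact0 !mulr1.
have -> : (2 * m.+1 = (2 * m).+2)%N by lia.
rewrite step IH /falling big_ord_recl.
have -> : \prod_(i < m) (N%:R / 2 + m.+1%:R - 1 - (bump 0 i)%:R) =
   \prod_(j < m) (N%:R / 2 + m%:R - 1 - j%:R :> R).
  by apply: eq_bigr => i _; rewrite /bump /= add1n -!natr1; ring.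
rewrite !factS !exprS /= subr0.
set P := \prod_(j < m) _.
set F1 := (m`!)%:R. set F2 := ((2 * m)`!)%:R. set E := 2 ^+ (2 * m).
rewrite -[(2 * m).+2]addn2 -[(2 * m).+1]addn1 -[m.+1]addn1 ?(natrD, natrM) -/F1 -/F2.
have h2 : (2:R) != 0 by rewrite pnatr_eq0.
by field.
Qed.


Theorem lemma3p3 (R : realType) (N m : nat) : (0 < N)%N ->
  forall x : 'rV[R]_N, x != 0 ->
  gamma_at (2 * m)%:R (2 * m) x =
    2 ^+ (2 * m) * (m`!)%:R * ((2 * m)`!)%:R * falling (N%:R / 2 + m%:R - 1) m.
Proof.
move=> _ x _.
have Hn : norm_pow (2 * m)%:R = @fm R N m.
  apply/funext => y; rewrite /norm_pow /eucl_norm powR_mulrn ?sqrtr_ge0 // exprM sqr_sqrtr.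
    by rewrite /fm /sq; congr (_ ^+ _); apply: eq_bigr => j _; rewrite expr2.
  by apply: sumr_ge0 => j _; rewrite sqr_ge0.
rewrite /gamma_at subrr powRr0 mul1r /grad_norm Hn sqr_sqrtr; last first.
  by apply: sumr_ge0 => i _; rewrite sqr_ge0.
rewrite -(Bmain m x) /B; apply: eq_bigr => i _; by rewrite expr2.
Qed.
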